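(* Every fractionally $\mathrm{tree}\text{-}\alpha$-fragile graph class has bounded induced biclique number.
   Context: $\alpha$ denotes independence number. The tree-independence number $\mathrm{tree}\text{-}\alpha(G)$ is the minimum over tree decompositions $(T,\{X_t\})$ of $G$ (tree $T$, bags covering vertices and edges, each vertex's bags forming a subtree) of $\max_t\alpha(G[X_t])$. For $\beta\le1$, a $\beta$-general cover of $G$ is a multiset $\mathcal{C}$ of subsets of $V(G)$ with each vertex in at least $\beta|\mathcal{C}|$ members. A class $\mathcal{G}$ (not necessarily hereditary) is fractionally $\mathrm{tree}\text{-}\alpha$-fragile if there is $f\colon\mathbb{N}\to\mathbb{N}$ such that for every $r\in\mathbb{N}$ every $G\in\mathcal{G}$ has a $(1-1/r)$-general cover $\mathcal{C}$ with $\mathrm{tree}\text{-}\alpha(G[C])\le f(r)$ for all $C\in\mathcal{C}$. The induced biclique number of $G$ is the maximum $n$ such that $K_{n,n}$ is an induced subgraph of $G$. *)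

(* Defs.v *)
From mathcomp Require Import all_boot.
Set Implicit Arguments. Unset Strict Implicit. Unset Printing Implicit Defensive.

Record graph := Graph {
  gV :> finType;
  gadj : rel gV;
  gadj_sym : symmetric gadj;
  gadj_irr : irreflexive gadj }.

Definition graph_class := graph -> Prop.

Section Induced.
Variables (G : graph) (C : {set G}).
Definition ind_V : finType := {x : G | x \in C}.
Definition ind_adj : rel ind_V := fun x y => gadj (val x) (val y).
Lemma ind_adj_sym : symmetric ind_adj.
Proof. by move=> x y; rewrite /ind_adj gadj_sym. Qed.
Lemma ind_adj_irr : irreflexive ind_adj.
Proof. by move=> x; rewrite /ind_adj gadj_irr. Qed.
Definition induced : graph := Graph ind_adj_sym ind_adj_irr.
End Induced.

Definition independent (G : graph) (A : {set G}) : bool :=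
  [forall x in A, forall y in A, ~~ gadj x y].

Definition alpha_of (G : graph) (S : {set G}) : nat :=
  \max_(A : {set G} | (A \subset S) && independent A) #|A|.

(* Finite trees: nonempty, connected, with exactly |I|-1 edges
   (edges counted as ordered pairs, hence the factor 2). *)
Definition is_tree (I : finType) (e : rel I) : Prop :=
  [/\ symmetric e, irreflexive e, 0 < #|I|,
      (forall s t : I, connect e s t) &
      #|[set p : I * I | e p.1 p.2]| = 2 * (#|I| - 1)].

Definition is_tree_decomposition (G : graph) (I : finType) (e : rel I)
    (X : I -> {set G}) : Prop :=
  [/\ is_tree e,
      (forall v : G, exists t, v \in X t),
      (forall u v : G, gadj u v -> exists t, (u \in X t) && (v \in X t)) &
      (forall (v : G) (s t : I), v \in X s -> v \in X t ->
         connect [rel a b | [&& e a b, v \in X a & v \in X b]] s t)].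

(* tree-alpha(G) <= k : some tree decomposition has all bags of
   independence number at most k (tree-alpha is the minimum over decompositions). *)
Definition tree_alpha_le (G : graph) (k : nat) : Prop :=
  exists (I : finType) (e : rel I) (X : I -> {set G}),
    is_tree_decomposition e X /\ forall t, alpha_of (X t) <= k.

(* A (1 - 1/r)-general cover (r >= 1): a nonempty multiset (here a seq) of
   vertex subsets with each vertex in at least (1 - 1/r)|C| members,
   i.e. r * #{C in cov | v in C} >= (r - 1) * |cov|. *)
Definition general_cover (G : graph) (r : nat) (cov : seq {set G}) : Prop :=
  0 < size cov /\
  forall v : G, (r - 1) * size cov <= r * count (fun C : {set G} => v \in C) cov.

Definition frac_tree_alpha_fragile (K : graph_class) : Prop :=
  exists f : nat -> nat, forall r : nat, 0 < r ->
    forall G : graph, K G ->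
      exists cov : seq {set G}, general_cover r cov /\
        forall C : {set G}, C \in cov -> tree_alpha_le (induced C) (f r).

Definition has_induced_biclique (G : graph) (n : nat) : Prop :=
  exists A B : {set G},
    [/\ #|A| = n, #|B| = n, [disjoint A & B],
        independent A /\ independent B &
        forall a b, a \in A -> b \in B -> gadj a b].

Definition bounded_induced_biclique (K : graph_class) : Prop :=
  exists N : nat, forall G : graph, K G ->
    forall n, has_induced_biclique G n -> n <= N.

(* Main.v *)
Require Import Defs.
From mathcomp Require Import all_boot zify.
From Stdlib Require Import Classical.
Set Implicit Arguments. Unset Strict Implicit. Unset Printing Implicit Defensive.

Definition rs (I : finType) (e : rel I) (P : pred I) : rel I :=
  fun x y => [&& e x y, P x & P y].

Lemma connect_map (T : finType) (r r' : rel T) (phi : T -> T) :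
  (forall x y, r x y -> connect r' (phi x) (phi y)) ->
  forall x y, connect r x y -> connect r' (phi x) (phi y).
Proof.
move=> H x y /connectP [p pth ->]; elim: p x pth => [|z p IH] x /=.
  by rewrite connect0.
by case/andP => rxz pz; apply: connect_trans (H _ _ rxz) (IH _ pz).
Qed.

Lemma connect_step (T : finType) (r : rel T) x z :
  connect r x z -> x != z -> exists y, r x y.
Proof.
move=> /connectP [[|y p] pth ->] /=; first by rewrite eqxx.
by case/andP: pth => rxy _ _; exists y.
Qed.

Lemma del_leaf (I : finType) (e : rel I) (P : pred I) l p :
  symmetric e -> (forall y, P y -> e l y -> y = p) ->
  forall s t, connect (rs e P) s t ->
  connect (rs e (fun x => P x && (x != l)))
     (if s == l then p else s) (if t == l then p else t).
Proof.
move=> sym uq; apply: connect_map => x y /and3P [exy Px Py].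
case: (eqVneq x l) => [xl|xl].
  subst x; have -> := uq _ Py exy; by case: ifP.
case: (eqVneq y l) => [yl|yl].
  subst y; rewrite sym in exy; have E := uq _ Px exy; subst x; exact: connect0.
by apply: connect1; rewrite /rs /= exy Px Py xl yl.
Qed.

Lemma pairs_sum (I : finType) (R : rel I) :
  #|[set q : I * I | R q.1 q.2]| = \sum_x #|[set y | R x y]|.
Proof.
rewrite -sum1_card (eq_bigr (fun x => \sum_(y | R x y) 1)); last first.
  by move=> x _; rewrite -sum1_card; apply: eq_bigl => y; rewrite inE.
rewrite pair_big_dep /=; apply: eq_bigl => -[a b] /=; by rewrite !inE.
Qed.

Lemma leaf_exists (I : finType) (e : rel I) (S : {set I}) :
  irreflexive e ->
  (forall s t, s \in S -> t \in S -> connect (rs e (fun x => x \in S)) s t) ->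
  #|[set q : I * I | rs e (fun x => x \in S) q.1 q.2]| = 2 * (#|S| - 1) ->
  1 < #|S| ->
  exists l p, [/\ l \in S, p \in S, e l p & forall y, y \in S -> e l y -> y = p].
Proof.
move=> irr con cnt S2.
set d := fun x => #|[set y | rs e (fun x => x \in S) x y]|.
have [x /andP [xS dx]] : exists x, (x \in S) && (d x <= 1).
  apply/existsP; apply: contraT; rewrite negb_exists => /forallP H.
  have : 2 * #|S| <= \sum_x d x.
    rewrite mulnC -sum_nat_const big_mkcond /=; apply: leq_sum => x _.
    by have := H x; case: (x \in S) => //=; rewrite -ltnNge.
  by rewrite -pairs_sum cnt; lia.
have [y yS yx] : exists2 y, y \in S & y != x.
  have : 1 < #|S| by [].
  rewrite (cardsD1 x S) xS ltnS card_gt0 => /set0Pn [y]; rewrite !inE => /andP [yx yS].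
  by exists y.
have xy : x != y by rewrite eq_sym.
have [z /and3P [exz _ zS]] := connect_step (con _ _ xS yS) xy.
exists x, z; split => // w wS exw.
move/card_le1_eqP: dx => H.
by apply: H; rewrite inE /rs /= ?exw ?exz xS ?wS ?zS.
Qed.

Definition tree_on (I : finType) (e : rel I) (S : {set I}) :=
  [/\ symmetric e, irreflexive e, 0 < #|S|,
   (forall s t, s \in S -> t \in S -> connect (rs e (fun x => x \in S)) s t) &
   #|[set q : I * I | rs e (fun x => x \in S) q.1 q.2]| = 2 * (#|S| - 1)].

Lemma del_count (I : finType) (e : rel I) (S : {set I}) l p :
  symmetric e -> irreflexive e -> l \in S -> p \in S -> e l p ->
  (forall y, y \in S -> e l y -> y = p) ->
  #|[set q : I * I | rs e (fun x => x \in S) q.1 q.2]| =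
  (#|[set q : I * I | rs e (fun x => x \in S :\ l) q.1 q.2]|).+2.
Proof.
move=> sym irr lS pS elp uq.
have pl : p != l by apply: contraTneq elp => ->; rewrite irr.
have E : [set q : I * I | rs e (fun x => x \in S) q.1 q.2] =
   (l, p) |: ((p, l) |: [set q : I * I | rs e (fun x => x \in S :\ l) q.1 q.2]).
  apply/setP => -[a b]; rewrite !inE /rs /= !inE.
  case: (eqVneq a l) => [->|al] /=.
    rewrite lS /= andbF orbF !xpair_eqE eqxx /= (eq_sym l p) (negbTE pl) /= orbF.
    case: (eqVneq b p) => [->|bp] /=; first by rewrite elp pS.
    by apply/negP => /andP [H1 H2]; move: bp; rewrite (uq _ H2 H1) eqxx.
  case: (eqVneq b l) => [->|bl] /=.
    rewrite lS !xpair_eqE (negbTE al) eqxx /= !andbT !andbF orbF.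
    case: (eqVneq a p) => [->|ap] /=; first by rewrite sym elp pS.
    by apply/negP => /andP [H1 H2]; move: ap; rewrite sym in H1; rewrite (uq _ H2 H1) eqxx.
  by rewrite !xpair_eqE (negbTE al) (negbTE bl) /= andbF.
rewrite E cardsU1 cardsU1 !inE /rs /= !inE eqxx !xpair_eqE (negbTE pl) /= !andbF /=.
by [].
Qed.

Lemma core (I V : finType) (e : rel I) (X : I -> {set V}) (A B : {set V}) n :
 forall S : {set I}, #|S| <= n -> tree_on e S ->
 (forall v, v \in A :|: B -> exists2 t, t \in S & v \in X t) ->
 (forall v s t, v \in A :|: B -> s \in S -> t \in S -> v \in X s -> v \in X t ->
    connect (rs e (fun x => (x \in S) && (v \in X x))) s t) ->
 (forall a b, a \in A -> b \in B -> exists t, [&& t \in S, a \in X t & b \in X t]) ->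
 exists t, (A \subset X t) || (B \subset X t).
Proof.
elim: n => [|n IH] S Sn [sym irr S0 con cnt] cov sub inter.
  by move: S0; rewrite lt0n -leqn0 Sn.
have [S1|S2] := leqP #|S| 1.
  have /cards1P [t0 St0] : #|S| == 1 by rewrite eqn_leq S1 S0.
  exists t0; apply/orP; left; apply/subsetP => v vA.
  have vAB : v \in A :|: B by rewrite inE vA.
  have [t] := cov v vAB.
  by rewrite St0 inE => /eqP ->.
have [l [p [lS pS elp uq]]] := leaf_exists irr con cnt S2.
have pl : p != l by apply: contraTneq elp => ->; rewrite irr.
case: (classic (exists v, v \in A :|: B /\ forall t, t \in S -> v \in X t -> t = l)).
  move=> [v [vAB vl]].
  have [t tS0 vt] := cov v vAB; have tl := vl t tS0 vt; subst t.
  exists l; apply/orP.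
  case/setUP: vAB => vA; [right|left]; apply/subsetP => w wB.
    by have [t /and3P [tS1 vt1 wt]] := inter v w vA wB; rewrite -(vl t tS1 vt1).
  by have [t /and3P [tS1 wt vt1]] := inter w v wB vA; rewrite -(vl t tS1 vt1).
move=> nov.
have cov' : forall v, v \in A :|: B -> exists2 t, t \in S :\ l & v \in X t.
  move=> v vAB; apply: NNPP => H; apply: nov; exists v; split => // t tS vt.
  apply/eqP; apply: contraT => tl; case: H; exists t => //; by rewrite !inE tl tS.
apply: (IH (S :\ l)).
- by move: Sn; rewrite (cardsD1 l S) lS.
- split => //.
  + by have := cardsD1 l S; rewrite lS; lia.
  + move=> s t; rewrite !inE => /andP [sl sS] /andP [tl tS].
    have := del_leaf sym (fun y yS ely => uq y yS ely) (con s t sS tS).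
    rewrite (negbTE sl) (negbTE tl) => H.
    suff E : rs e (fun x => x \in S :\ l) =2 rs e (fun x => (x \in S) && (x != l)) by rewrite (eq_connect E).
    move=> x y.
    by rewrite /rs /= !inE; case: (x != l); case: (y != l); rewrite /= ?andbF ?andbT.
  + have := del_count sym irr lS pS elp uq.
    have := cardsD1 l S; rewrite lS; lia.
- exact: cov'.
- move=> v s t vAB; rewrite !inE => /andP [sl sS] /andP [tl tS] vs vt.
  have := del_leaf sym (P := fun x => (x \in S) && (v \in X x)) (l := l) (p := p)
     (fun y yS ely => uq y (proj1 (andP yS)) ely) (sub v s t vAB sS tS vs vt).
  rewrite (negbTE sl) (negbTE tl) => H.
  suff E : rs e (fun x => (x \in S :\ l) && (v \in X x)) =2 rs e (fun x => ((x \in S) && (v \in X x)) && (x != l)) by rewrite (eq_connect E).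
  move=> x y.
  by rewrite /rs /= !inE; case: (x != l); case: (y != l); rewrite /= ?andbF ?andbT.
- move=> a b aA bB.
  have [t /and3P [tS at_ bt]] := inter a b aA bB.
  case: (eqVneq t l) => [tl|tl]; last by exists t; rewrite !inE tl tS at_ bt.
  subst t.
  have toP : forall v, v \in A :|: B -> v \in X l -> v \in X p.
    move=> v vAB vl.
    have [t] := cov' v vAB; rewrite !inE => /andP [tl tS2] vt.
    have lt : l != t by rewrite eq_sym.
    have [y /and3P [ely _ /andP [yS vy]]] :=
      connect_step (sub v l t vAB lS tS2 vl vt) lt.
    by rewrite -(uq y yS ely).
  exists p; rewrite !inE pl pS !toP // inE ?aA ?bB ?orbT //.
Qed.

Lemma avg (T : finType) (cov : seq {set T}) (A : {set T}) :
 (forall v, 3 * size cov <= 4 * count (fun C : {set T} => v \in C) cov) ->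
 4 * \sum_(C <- cov) #|A :\: C| <= #|A| * size cov.
Proof.
move=> H.
have E : \sum_(C <- cov) #|A :\: C| = \sum_(v in A) count (fun C : {set T} => v \notin C) cov.
  transitivity (\sum_(C <- cov) \sum_(v | (v \in A) && (v \notin C)) 1).
    apply: eq_bigr => C _; rewrite -sum1_card; apply: eq_bigl => v; by rewrite !inE andbC.
  rewrite (exchange_big_dep (fun v => v \in A)) /=; last by move=> C v _ /andP [].
  apply: eq_bigr => v vA; rewrite -sum1_count; apply: eq_bigl => C; by rewrite vA.
rewrite E big_distrr /= -sum_nat_const; apply: leq_sum => v _.
have := count_predC (fun C : {set T} => v \in C) cov.
have := H v.
have -> : count (predC (fun C : {set T} => v \in C)) cov = count (fun C : {set T} => v \notin C) cov by [].
lia.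
Qed.

Lemma td_biclique (H : graph) k (A B : {set H}) :
  tree_alpha_le H k -> independent A -> independent B ->
  (forall a b, a \in A -> b \in B -> gadj a b) -> (#|A| <= k) \/ (#|B| <= k).
Proof.
move=> [I [e [X [[[sym irr I0 con cnt] covr edg subt] bnd]]]] iA iB AB.
have [t /orP [sA|sB]] : exists t, (A \subset X t) || (B \subset X t).
- apply: (@core I H e X A B #|[set: I]| [set: I]) => //.
  + split => //.
    * by rewrite cardsT; apply: I0.
    * move=> s t _ _.
      suff E : rs e (fun x => x \in [set: I]) =2 e by rewrite (eq_connect E) con.
      by move=> x y; rewrite /rs !inE /= ?andbT.
    * rewrite cardsT -cnt; apply: eq_card => q; by rewrite !inE /rs !inE /= ?andbT.
  + by move=> v _; have [t vt] := covr v; exists t; rewrite ?inE.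
  + move=> v s t _ _ _ vs vt; have := subt v s t vs vt.
    suff E : rs e (fun x => (x \in [set: I]) && (v \in X x)) =2
             [rel a b | [&& e a b, v \in X a & v \in X b]] by rewrite (eq_connect E).
    by move=> x y; rewrite /rs /= !inE.
  + move=> a b aA bB; have [t abt] := edg a b (AB a b aA bB); exists t; by rewrite inE.
- left; apply: leq_trans (bnd t); rewrite /alpha_of.
  by apply: (@leq_bigmax_cond _ (fun A0 : {set H} => (A0 \subset X t) && independent A0) (fun A0 => #|A0|) A); rewrite sA iA.
- right; apply: leq_trans (bnd t); rewrite /alpha_of.
  by apply: (@leq_bigmax_cond _ (fun A0 : {set H} => (A0 \subset X t) && independent A0) (fun A0 => #|A0|) B); rewrite sB iB.
Qed.

Lemma lift_set (G : graph) (C A : {set G}) (iA : independent A) :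
  let A' := [set x : induced C | val x \in A] in
  #|A'| = #|A :&: C| /\ independent A'.
Proof.
move=> A'; split.
  rewrite -(card_imset _ val_inj); apply: eq_card => v.
  rewrite !inE; apply/imsetP/andP.
    by move=> [x]; rewrite inE => xA ->; split => //; exact: (valP x).
  by move=> [vA vC]; exists (exist _ v vC); rewrite ?inE.
apply/forallP => x; apply/implyP; rewrite inE => xA; apply/forallP => y; apply/implyP; rewrite inE => yA.
by move/forallP: iA => /(_ (val x)) /implyP /(_ xA) /forallP /(_ (val y)) /implyP /(_ yA).
Qed.

Lemma sum_lb (T : eqType) (s : seq T) (F : T -> nat) c :
  (forall x, x \in s -> c <= F x) -> c * size s <= \sum_(x <- s) F x.
Proof.
elim: s => [|x s IH] H; first by rewrite big_nil muln0.
rewrite big_cons /= mulnS; apply: leq_add; first by apply: H; rewrite inE eqxx.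
by apply: IH => y ys; apply: H; rewrite inE ys orbT.
Qed.

Theorem lemma5p5 (K : graph_class) :
  frac_tree_alpha_fragile K -> bounded_induced_biclique K.
Proof.
move=> [f Hf]; exists (2 * f 4) => G KG n [A [B [cA cB dAB [iA iB] AB]]].
have [cov [[c0 gc] Hc]] := Hf 4 isT G KG.
have [C CC HC] : exists2 C, C \in cov & 2 * (#|A :\: C| + #|B :\: C|) <= n.
  apply/exists_inP; apply: contraT; rewrite negb_exists_in => /forall_inP Hn.
  have hA := avg A gc; have hB := avg B gc.
  have : (n.+1) * size cov <= \sum_(C <- cov) 2 * (#|A :\: C| + #|B :\: C|).
    by apply: sum_lb => C CC; have := Hn C CC; rewrite -ltnNge.
  rewrite -big_distrr /= big_split /=.
  move: hA hB; rewrite cA cB; lia.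
have [cA' iA'] := lift_set C iA.
have [cB' iB'] := lift_set C iB.
have := td_biclique (Hc C CC) iA' iB'.
case.
- move=> a b; rewrite !inE => aA bB; exact: AB.
- rewrite cA' => h; have := cardsID C A; move: HC h; rewrite cA; lia.
- rewrite cB' => h; have := cardsID C B; move: HC h; rewrite cB; lia.
Qed.
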